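(* Let $m\ge n$, $c_1,\dots,c_m>0$, positive integers $n_i\le n$ with $\sum_i c_in_i=n$, and surjective linear maps $B_i:\mathbb{R}^n\to\mathbb{R}^{n_i}$ with $\bigcap_i\ker B_i=\{0\}$. With $I$, $J$ as defined in the context, set $$E_g=\inf\Big\{\frac{I((g_i)_{i=1}^m)}{\prod_{i=1}^m(\int_{\mathbb{R}^{n_i}} g_i)^{c_i}}\Big\},\qquad F_g=\sup\Big\{\frac{J((g_i)_{i=1}^m)}{\prod_{i=1}^m(\int_{\mathbb{R}^{n_i}} g_i)^{c_i}}\Big\},$$ the infimum and supremum taken over all $m$-tuples with each $g_i$ a centered Gaussian function on $\mathbb{R}^{n_i}$. Then $E_g\cdot F_g=1$, and $E_g=0$ if and only if $F_g=+\infty$.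
   Context: For non-negative integrable $f_i$ on $\mathbb{R}^{n_i}$: $I((f_i)_{i=1}^m)=\int^*_{\mathbb{R}^n}\sup\{\prod_i f_i^{c_i}(y_i);\ \sum_i c_iB_i^*y_i=x,\ y_i\in\mathbb{R}^{n_i}\}\,dx$ (outer integral) and $J((f_i)_{i=1}^m)=\int_{\mathbb{R}^n}\prod_i f_i^{c_i}(B_ix)\,dx$. $B_i^*$ is the Euclidean adjoint. A centered Gaussian function on $\mathbb{R}^k$ is $x\mapsto\exp(-\langle Ax,x\rangle)$ with $A$ a symmetric positive definite $k\times k$ matrix. *)

(* Defs.v *)
From HB Require Import structures.
From mathcomp Require Import all_boot all_order all_algebra.
From mathcomp Require Import all_classical all_reals all_analysis.
Set Implicit Arguments. Unset Strict Implicit. Unset Printing Implicit Defensive.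
Import Order.TTheory GRing.Theory Num.Theory.
Local Open Scope classical_set_scope.
Local Open Scope ring_scope.

(* R^k is modelled by row vectors 'rV[R]_k; a linear map R^n -> R^k is a
   matrix B : 'M[R]_(n, k) acting by x |-> x *m B.  Its Euclidean adjoint is
   y |-> y *m B^T.  <u, v> = (u *m v^T) 0 0. *)

Definition dotv (R : realType) (k : nat) (u v : 'rV[R]_k) : R := (u *m v^T) 0 0.

Fixpoint iter_int (R : realType) (k : nat) (f : seq R -> \bar R) : \bar R :=
  match k with
  | 0 => f [::]
  | k'.+1 => (\int[@lebesgue_measure R]_t iter_int k' (fun s => f (t :: s)))%E
  end.

(* Lebesgue integral over R^k of a non-negative Borel function
   (by Tonelli, it equals the iterated integral). *)
Definition int_Rn (R : realType) (k : nat) (f : 'rV[R]_k -> \bar R) : \bar R :=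
  iter_int k (fun s => f (\row_(i < k) nth 0 s i)).

Definition borel_fun (R : realType) (k : nat) (h : 'rV[R]_k -> \bar R) : Prop :=
  forall t : R, <<s [set A : set 'rV[R^o]_k | open A] >> [set x | (t%:E < h x)%E].

Definition outer_int (R : realType) (k : nat) (F : 'rV[R]_k -> \bar R) : \bar R :=
  ereal_inf [set int_Rn h | h in
    [set h : 'rV[R]_k -> \bar R |
      borel_fun h /\ (forall x, 0 <= h x)%E /\ (forall x, F x <= h x)%E]].

Definition centered_gaussian (R : realType) (k : nat) (g : 'rV[R]_k -> R) : Prop :=
  exists A : 'M[R]_k,
    A^T = A /\ (forall x : 'rV[R]_k, x != 0 -> 0 < dotv (x *m A) x) /\
    (forall x, g x = expR (- dotv (x *m A) x)).

Definition I_fun (R : realType) (n m : nat) (nn : 'I_m -> nat) (c : 'I_m -> R)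
  (B : forall i, 'M[R]_(n, nn i)) (f : forall i, 'rV[R]_(nn i) -> R) : \bar R :=
  outer_int (fun x : 'rV[R]_n =>
    ereal_sup [set ((\prod_(i < m) powR (f i (y i)) (c i))%:E) | y in
      [set y : (forall i, 'rV[R]_(nn i)) |
         \sum_(i < m) c i *: (y i *m (B i)^T) = x]]).

Definition J_fun (R : realType) (n m : nat) (nn : 'I_m -> nat) (c : 'I_m -> R)
  (B : forall i, 'M[R]_(n, nn i)) (f : forall i, 'rV[R]_(nn i) -> R) : \bar R :=
  int_Rn (fun x : 'rV[R]_n => (\prod_(i < m) powR (f i (x *m B i)) (c i))%:E).

(* prod_i (int g_i)^{c_i}  (the integrals of Gaussians are finite and > 0). *)
Definition prod_int (R : realType) (m : nat) (nn : 'I_m -> nat) (c : 'I_m -> R)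
  (f : forall i, 'rV[R]_(nn i) -> R) : R :=
  \prod_(i < m) powR (fine (int_Rn (fun y => (f i y)%:E))) (c i).

Definition gaussian_tuple (R : realType) (m : nat) (nn : 'I_m -> nat)
  (f : forall i, 'rV[R]_(nn i) -> R) : Prop :=
  forall i, centered_gaussian (f i).

Definition E_g (R : realType) (n m : nat) (nn : 'I_m -> nat) (c : 'I_m -> R)
  (B : forall i, 'M[R]_(n, nn i)) : \bar R :=
  ereal_inf [set (I_fun c B f * ((prod_int c f)^-1)%:E)%E | f in
     [set f | gaussian_tuple f]].

Definition F_g (R : realType) (n m : nat) (nn : 'I_m -> nat) (c : 'I_m -> R)
  (B : forall i, 'M[R]_(n, nn i)) : \bar R :=
  ereal_sup [set (J_fun c B f * ((prod_int c f)^-1)%:E)%E | f in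
     [set f | gaussian_tuple f]].

(* Main.v *)
Require Import Defs.
From HB Require Import structures.
From mathcomp Require Import all_boot all_order all_algebra.
From mathcomp Require Import all_classical all_reals all_analysis.
From mathcomp Require Import ring lra.
Set Implicit Arguments. Unset Strict Implicit. Unset Printing Implicit Defensive.
Import Order.TTheory GRing.Theory Num.Theory.
Local Open Scope classical_set_scope.
Local Open Scope ring_scope.

Section P2.
Variable R : realType.

Definition PD k (A : 'M[R]_k) := forall x : 'rV[R]_k, x != 0 -> 0 < dotv (x *m A) x.

Lemma dotvC k (u v : 'rV[R]_k) : dotv u v = dotv v u.
Proof. by rewrite /dotv -[in LHS](trmxK u) -trmx_mul mxE. Qed.

Lemma dotvA k l (u : 'rV[R]_k) (A : 'M[R]_(k, l)) v :
  dotv (u *m A) v = dotv u (v *m A^T).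
Proof. by rewrite /dotv trmx_mul trmxK mulmxA. Qed.

Lemma dotvDl k (u u' v : 'rV[R]_k) : dotv (u + u') v = dotv u v + dotv u' v.
Proof. by rewrite /dotv mulmxDl mxE. Qed.

Lemma dotvZl k a (u v : 'rV[R]_k) : dotv (a *: u) v = a * dotv u v.
Proof. by rewrite /dotv -scalemxAl mxE. Qed.

Lemma dotvDr k (u v v' : 'rV[R]_k) : dotv u (v + v') = dotv u v + dotv u v'.
Proof. by rewrite dotvC dotvDl !(dotvC _ u). Qed.

Lemma dotvZr k a (u v : 'rV[R]_k) : dotv u (a *: v) = a * dotv u v.
Proof. by rewrite dotvC dotvZl dotvC. Qed.

Lemma dotv0l k (v : 'rV[R]_k) : dotv 0 v = 0.
Proof. by rewrite /dotv mul0mx mxE. Qed.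

Lemma dotv0r k (v : 'rV[R]_k) : dotv v 0 = 0.
Proof. by rewrite dotvC dotv0l. Qed.

Lemma dotvNl k (u v : 'rV[R]_k) : dotv (- u) v = - dotv u v.
Proof. by rewrite -scaleN1r dotvZl mulN1r. Qed.

Lemma dotvNr k (u v : 'rV[R]_k) : dotv u (- v) = - dotv u v.
Proof. by rewrite dotvC dotvNl dotvC. Qed.

Lemma dotv_row k l (u1 v1 : 'rV[R]_k) (u2 v2 : 'rV[R]_l) :
  dotv (row_mx u1 u2) (row_mx v1 v2) = dotv u1 v1 + dotv u2 v2.
Proof. by rewrite /dotv tr_row_mx mul_row_col mxE. Qed.

Lemma dotv_sc (X : 'rV[R]_1) t : dotv X t%:M = t * X 0 0.
Proof.
rewrite /dotv tr_scalar_mx mul_mx_scalar mxE mulrC; congr (_ * _).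
Qed.

Lemma PD_unit k (A : 'M[R]_k) : PD A -> A \in unitmx.
Proof.
move=> pd; rewrite unitmxE unitfE; apply/negP => /det0P [v v0 vA].
by have := pd v v0; rewrite vA dotv0l ltxx.
Qed.

Lemma quad_block k (a : 'M[R]_1) (w : 'M[R]_(1, k)) (P : 'M[R]_k) tau (y : 'rV[R]_k) :
  dotv (row_mx (tau%:M) y *m block_mx a w w^T P) (row_mx tau%:M y)
  = a 0 0 * tau ^+ 2 + 2 * tau * dotv y w + dotv (y *m P) y.
Proof.
rewrite mul_row_block dotv_row dotv_sc dotvDl.
rewrite !mul_scalar_mx dotvZl.
have -> : (tau *: a + y *m w^T) 0 0 = tau * a 0 0 + dotv y w.
  by rewrite /dotv [LHS]mxE [(tau *: a) 0 0]mxE.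
rewrite (dotvC w y); ring.
Qed.


Section Schur.
Variables (k : nat) (Q : 'M[R]_(1 + k)).
Hypotheses (Qs : Q^T = Q) (Qpd : PD Q).
Let w := ursubmx Q.
Let P := drsubmx Q.
Let a := ulsubmx Q.
Let v := w *m invmx P.
Let S := a 0 0 - dotv v w.

Lemma schur_blk : Q = block_mx a w w^T P.
Proof.
rewrite -[LHS]submxK; congr block_mx.
by rewrite /w trmx_ursub Qs.
Qed.

Lemma schur_Ps : P^T = P.
Proof. by rewrite /P trmx_drsub Qs. Qed.

Lemma schur_Ppd : PD P.
Proof.
move=> y y0.
have := Qpd (x := row_mx (0%:M) y).
rewrite schur_blk quad_block.
rewrite expr2 !(mulr0, mul0r, add0r); apply.
by rewrite row_mx_eq0 negb_and y0 orbT.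
Qed.

Lemma schur_Pu : P \in unitmx.
Proof. exact: PD_unit schur_Ppd. Qed.

Lemma schur_quad tau (y : 'rV[R]_k) :
  dotv (row_mx (tau%:M) y *m Q) (row_mx tau%:M y) =
  dotv ((y + tau *: v) *m P) (y + tau *: v) + S * tau ^+ 2.
Proof.
rewrite {1}schur_blk quad_block mulmxDl !dotvDl !dotvDr -!scalemxAl.
rewrite !dotvZl !dotvZr.
have vP : v *m P = w by rewrite /v -mulmxA mulVmx ?mulmx1 // schur_Pu.
have h1 z : dotv (v *m P) z = dotv w z by rewrite vP.
have h2 : dotv (y *m P) v = dotv y w by rewrite dotvA schur_Ps -vP.
rewrite h2 !h1 /S (dotvC w y) (dotvC w v).
ring.
Qed.

Lemma schur_S : 0 < S.
Proof.
have := Qpd (x := row_mx 1%:M (- v)).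
rewrite schur_quad scale1r addNr mul0mx dotv0l add0r expr1n mulr1; apply.
by rewrite row_mx_eq0 negb_and matrix_nonzero1.
Qed.

Lemma schur_det : \det Q = S * \det P.
Proof.
have Pu := schur_Pu.
have vP : v *m P = w by rewrite /v -mulmxA mulVmx ?mulmx1.
have -> : Q = block_mx 1%:M v 0 1%:M *m block_mx (S%:M) 0 0 P *m
   block_mx 1%:M 0 (invmx P *m w^T) 1%:M.
  rewrite !mulmx_block !(mul0mx, mulmx0, mul1mx, mulmx1, addr0, add0r).
  rewrite {1}schur_blk; congr block_mx.
  - rewrite vP mulmxA -/v [v *m w^T]mx11_scalar -raddfD /= /S /dotv subrK.
    exact: mx11_scalar.
  - by rewrite vP.
  - by rewrite mulmxA mulmxV // mul1mx.
rewrite !det_mulmx (det_ublock (1%:M : 'M[R]_1) v) (det_ublock (S%:M : 'M[R]_1)) (det_lblock (1%:M : 'M[R]_1)) !det1 det_scalar1.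
by rewrite !mul1r mulr1.
Qed.

End Schur.

Lemma PD_det_gt0 k (Q : 'M[R]_k) : Q^T = Q -> PD Q -> 0 < \det Q.
Proof.
elim: k Q => [|k IH] Q Qs Qpd; first by rewrite det_mx00.
have := schur_det Qs Qpd; rewrite /= => ->.
by apply: mulr_gt0; [exact: schur_S | apply: IH; [exact: schur_Ps | exact: schur_Ppd]].
Qed.


Lemma gauss1 (c S u0 : R) : 0 <= c -> 0 < S ->
  (\int[@lebesgue_measure R]_t (c * expR (- (S * (t - u0) ^+ 2)))%:E)%E
  = (c * Num.sqrt (pi / S))%:E.
Proof.
move=> c0 S0.
set sg := Num.sqrt ((S *+ 2)^-1).
have sg2 : sg ^+ 2 = (S *+ 2)^-1.
  by rewrite sqr_sqrtr // invr_ge0 mulrn_wge0 // ltW.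
have sg0 : sg != 0.
  by rewrite /sg sqrtr_eq0 -ltNge invr_gt0 mulrn_wgt0.
have E : forall t, c * expR (- (S * (t - u0) ^+ 2)) =
    (c * Num.sqrt (pi / S)) * normal_pdf u0 sg t.
  move=> t; rewrite /normal_pdf (negbTE sg0) /normal_fun /normal_peak sg2.
  have -> : (S *+ 2)^-1 *+ 2 = S^-1.
    by rewrite -mulr_natr -[S *+ 2]mulr_natr; field; exact: lt0r_neq0.
  rewrite -mulrA; congr (_ * _).
  rewrite mulrA.
  have -> : (S *+ 2)^-1 * pi *+ 2 = pi / S.
    by rewrite -mulr_natr -[S *+ 2]mulr_natr; field; exact: lt0r_neq0.
  rewrite mulrA mulfV ?mul1r; last by rewrite sqrtr_eq0 -ltNge divr_gt0 // pi_gt0.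
  by rewrite invrK; congr expR; ring.
under eq_integral do rewrite E EFinM.
rewrite ge0_integralZl_EFin //.
- by rewrite integral_normal_pdf mule1.
- by move=> x _; rewrite lee_fin normal_pdf_ge0.
- by apply/measurable_realfun.measurable_EFinP; exact: measurable_normal_pdf.
- by rewrite mulr_ge0 // sqrtr_ge0.
Qed.

Definition rowS k (s : seq R) : 'rV[R]_k := \row_(i < k) nth 0 s i.

Lemma rowS_cons k t s : rowS k.+1 (t :: s) = row_mx (t%:M : 'M[R]_1) (rowS k s).
Proof.
apply/rowP => j; rewrite !mxE; case: splitP => j' /= ->.
  by rewrite ord1 !mxE /= mulr1n.
by rewrite !mxE.
Qed.

Lemma rowS_sub k t s (u : 'rV[R]_(1 + k)) :
  rowS k.+1 (t :: s) - u = row_mx ((t - u 0 0)%:M) (rowS k s - rsubmx u).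
Proof.
apply/rowP => j; rewrite !mxE; case: splitP => j' /= Hj.
  rewrite !mxE Hj ord1 /= mulr1n.
  by congr (t - u 0 _); apply: val_inj; rewrite /= Hj [j']ord1.
rewrite Hj /= [RHS]mxE [rowS k s 0 j']mxE [X in _ = _ + X]mxE mxE /=.
by congr (_ - u 0 _); apply: val_inj.
Qed.

Lemma iter_int_ge0 k (f : seq R -> \bar R) : (forall s, (0 <= f s)%E) -> (0 <= iter_int k f)%E.
Proof.
elim: k f => [|k IH] f f0 //=.
by apply: integral_ge0 => t _; apply: IH.
Qed.

Lemma iter_int_le k (f g : seq R -> \bar R) : (forall s, (0 <= f s)%E) ->
  (forall s, (f s <= g s)%E) -> (iter_int k f <= iter_int k g)%E.
Proof.
elim: k f g => [|k IH] f g f0 fg //=.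
have g0 s : (0 <= g s)%E by apply: le_trans (fg s).
rewrite !ge0_integralTE; first 1 last.
- by move=> t; apply: iter_int_ge0.
- by move=> t; apply: iter_int_ge0.
apply: ereal_sup_le => _ [h hf <-]; exists h => // t.
by apply: le_trans (hf t) _; apply: IH.
Qed.

Lemma gaussH k (Q : 'M[R]_k) (u : 'rV[R]_k) (c : R) : Q^T = Q -> PD Q -> 0 <= c ->
  iter_int k (fun s => (c * expR (- dotv ((rowS k s - u) *m Q) (rowS k s - u)))%:E)
  = (c * Num.sqrt (pi ^+ k / \det Q))%:E.
Proof.
elim: k Q u c => [|k IH] Q u c Qs Qpd c0.
  rewrite /= det_mx00 expr0 divr1 sqrtr1 mulr1.
  by rewrite /dotv mxE big_ord0 oppr0 expR0 mulr1.
set P := drsubmx (Q : 'M[R]_(1 + k)).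
set w := ursubmx (Q : 'M[R]_(1 + k)).
set v := w *m invmx P.
set S := ulsubmx (Q : 'M[R]_(1 + k)) 0 0 - dotv v w.
have S0 : 0 < S := schur_S Qs Qpd.
have Ps : P^T = P := schur_Ps Qs.
have Ppd : PD P := schur_Ppd Qs Qpd.
have dP0 : 0 < \det P := PD_det_gt0 Ps Ppd.
have inner : forall t, iter_int k (fun s =>
    (c * expR (- dotv ((rowS k.+1 (t :: s) - u) *m Q) (rowS k.+1 (t :: s) - u)))%:E)
  = ((c * Num.sqrt (pi ^+ k / \det P)) * expR (- (S * (t - u 0 0) ^+ 2)))%:E.
  move=> t.
  rewrite (_ : (fun s => _) = fun s => ((c * expR (- (S * (t - u 0 0) ^+ 2))) *
     expR (- dotv ((rowS k s - (rsubmx (u : 'rV[R]_(1 + k)) - (t - u 0 0) *: v)) *m P)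
                  (rowS k s - (rsubmx (u : 'rV[R]_(1 + k)) - (t - u 0 0) *: v))))%:E).
    rewrite IH //; last by rewrite mulr_ge0 // expR_ge0.
    by congr EFin; rewrite mulrAC.
  apply/funext => s; rewrite rowS_sub schur_quad //.
  have E : rowS k s - (rsubmx (u : 'rV[R]_(1 + k)) - (t - u 0 0) *: v) =
     rowS k s - rsubmx (u : 'rV[R]_(1 + k)) + (t - u 0 0) *: v.
    by rewrite opprD opprK addrA.
  rewrite E opprD expRD; congr EFin; rewrite -/v -/S; ring.
rewrite /=.
under eq_integral => t _ do rewrite inner.
rewrite gauss1 //; last by rewrite mulr_ge0 // sqrtr_ge0.
congr EFin.
rewrite (schur_det Qs Qpd) -/P -/w -/v -/S -mulrA -sqrtrM; last first.
  by rewrite divr_ge0 ?exprn_ge0 ?pi_ge0 // ltW.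
congr (c * Num.sqrt _).
rewrite exprS; field.
by apply/andP; split; apply: lt0r_neq0.
Qed.

Lemma cont_sum (T : topologicalType) n (f : 'I_n -> T -> R^o) :
  (forall i, continuous (f i)) -> continuous (fun x => \sum_(i < n) f i x).
Proof.
elim: n f => [|n IH] f fc.
  by under eq_fun do rewrite big_ord0; exact: cst_continuous.
under eq_fun do rewrite big_ord_recr /=.
move=> x; apply: continuousD; last exact: fc.
by apply: (IH (fun i => f (widen_ord (leqnSn n) i))) => i; exact: fc.
Qed.

Lemma cont_quad k (Q : 'M[R]_k) :
  continuous (fun x : 'rV[R^o]_k => (dotv (x *m Q) x : R^o)).
Proof.
have E : (fun x : 'rV[R^o]_k => (dotv (x *m Q) x : R^o)) =
  (fun x => \sum_(j < k) (\sum_(i < k) x 0 i * Q i j) * x 0 j).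
  apply/funext => x; rewrite /dotv mxE; apply: eq_bigr => j _.
  by rewrite !mxE.
rewrite E; apply: cont_sum => j x; apply: continuousM; last exact: coord_continuous.
apply: cont_sum => i y; apply: continuousM.
  exact: (@coord_continuous R^o 1 k 0 i).
first [exact: (@cst_continuous _ R (Q i j) y) | exact: (@cst_continuous _ R^o (Q i j) y)].
Qed.

End P2.

Section P5.
Variable R : realType.

Lemma int_gauss k (Q : 'M[R]_k) : Q^T = Q -> PD Q ->
  int_Rn (fun x => (expR (- dotv (x *m Q) x))%:E) = (Num.sqrt (pi ^+ k / \det Q))%:E.
Proof.
move=> Qs Qpd; have := @gaussH R k Q 0 1 Qs Qpd ler01.
rewrite mul1r => <-; rewrite /int_Rn; congr iter_int; apply/funext => s.
by rewrite subr0 mul1r.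
Qed.

Lemma borel_gauss k (Q : 'M[R]_k) :
  borel_fun (fun x : 'rV[R]_k => (expR (- dotv (x *m Q) x))%:E).
Proof.
move=> t; apply: sub_sigma_algebra.
have -> : [set x : 'rV[R^o]_k | (t%:E < (expR (- dotv (x *m Q) x))%:E)%E] =
   (fun x : 'rV[R^o]_k => (expR (dotv (x *m (- Q)) x) : R^o)) @^-1` [set y : R^o | t < y].
  by apply/seteqP; split => x /=; rewrite lte_fin mulmxN dotvNl.
apply: (continuousP _).1; last exact: open_gt.
move=> x; apply: (cvg_comp _ expR); last exact: continuous_expR.
exact: cont_quad.
Qed.

Lemma outer_gauss k (Q : 'M[R]_k) :
  outer_int (fun x : 'rV[R]_k => (expR (- dotv (x *m Q) x))%:E) =
  int_Rn (fun x : 'rV[R]_k => (expR (- dotv (x *m Q) x))%:E).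
Proof.
apply/eqP; rewrite eq_le; apply/andP; split.
  apply: ereal_inf_lbound; exists (fun x : 'rV[R]_k => (expR (- dotv (x *m Q) x))%:E) => //.
  split; first exact: borel_gauss.
  by split => x //; rewrite lee_fin expR_ge0.
apply/ereal_infP => _ [h [hb [h0 hF]] <-]; apply: iter_int_le => s //.
Qed.

End P5.

Section P6.
Variable R : realType.

Lemma PD_ge0 k (A : 'M[R]_k) x : PD A -> 0 <= dotv (x *m A) x.
Proof.
move=> pd; have [->|x0] := eqVneq x 0; first by rewrite mul0mx dotv0l.
exact/ltW/pd.
Qed.

Lemma PD_inv k (A : 'M[R]_k) : A^T = A -> PD A ->
  (invmx A)^T = invmx A /\ PD (invmx A).
Proof.
move=> As pd; have Au := PD_unit pd; split; first by rewrite trmx_inv As.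
move=> x x0; set y := x *m invmx A.
have xE : x = y *m A by rewrite /y mulmxKV.
have y0 : y != 0 by apply: contraNneq x0 => y0; rewrite xE y0 mul0mx.
by rewrite xE dotvC; exact: pd.
Qed.

Lemma dotv_sumr k (I : finType) (a : I -> R) (u : 'rV[R]_k) (w : I -> 'rV[R]_k) :
  dotv u (\sum_i a i *: w i) = \sum_i a i * dotv u (w i).
Proof.
rewrite /dotv raddf_sum /= mulmx_sumr summxE; apply: eq_bigr => i _.
by rewrite linearZ /= -scalemxAr mxE.
Qed.

Variables (n m : nat) (nn : 'I_m -> nat) (c : 'I_m -> R)
  (B : forall i : 'I_m, 'M[R]_(n, nn i)).
Hypothesis c0 : forall i, 0 < c i.
Hypothesis Bker : forall x : 'rV[R]_n, (forall i, x *m B i = 0) -> x = 0.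

Definition Msum (A : forall i, 'M[R]_(nn i)) : 'M[R]_n :=
  \sum_i c i *: (B i *m A i *m (B i)^T).

Lemma dotv_Msum A x :
  dotv (x *m Msum A) x = \sum_i c i * dotv ((x *m B i) *m A i) (x *m B i).
Proof.
rewrite /Msum /dotv mulmx_sumr mulmx_suml summxE; apply: eq_bigr => i _.
by rewrite -scalemxAr -scalemxAl mxE trmx_mul !mulmxA.
Qed.

Lemma Msum_sym A : (forall i, (A i)^T = A i) -> (Msum A)^T = Msum A.
Proof.
move=> As; rewrite /Msum raddf_sum /=; apply: eq_bigr => i _.
by rewrite linearZ /= !trmx_mul trmxK As mulmxA.
Qed.

Lemma Msum_PD A : (forall i, PD (A i)) -> PD (Msum A).
Proof.
move=> Apd x x0; rewrite dotv_Msum.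
have [i xi] : exists i, x *m B i != 0.
  apply: contrapT => H; move/negP: x0; apply; apply/eqP/Bker => i.
  by apply/eqP; apply/negPn/negP => xi; apply: H; exists i.
rewrite (bigD1 i) //=.
have h1 := Apd i _ xi.
have h2 : 0 <= \sum_(j | j != i) c j * dotv (x *m B j *m A j) (x *m B j).
  by apply: sumr_ge0 => j _; apply: mulr_ge0; [exact: ltW|exact: PD_ge0].
have := c0 i; nra.
Qed.


Section SupConv.
Variable A : forall i, 'M[R]_(nn i).
Hypothesis As : forall i, (A i)^T = A i.
Hypothesis Apd : forall i, PD (A i).

Definition Ninv := Msum (fun i => invmx (A i)).

Lemma Ninv_sym : Ninv^T = Ninv.
Proof. by apply: Msum_sym => i; case: (PD_inv (As i) (@Apd i)). Qed.

Lemma Ninv_PD : PD Ninv.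
Proof. by apply: Msum_PD => i; case: (PD_inv (As i) (@Apd i)). Qed.

Lemma Ninv_unit : Ninv \in unitmx.
Proof. exact: PD_unit Ninv_PD. Qed.

Definition ystar (x : 'rV[R]_n) i : 'rV[R]_(nn i) :=
  x *m invmx Ninv *m B i *m invmx (A i).

Lemma sc_key x (y : forall i, 'rV[R]_(nn i)) :
  \sum_i c i * dotv (y i *m A i) (ystar x i) =
  dotv (x *m invmx Ninv) (\sum_i c i *: (y i *m (B i)^T)).
Proof.
rewrite dotv_sumr; apply: eq_bigr => i _; congr (_ * _).
have Au := PD_unit (@Apd i).
by rewrite dotvA As /ystar mulmxKV // dotvC dotvA.
Qed.

Lemma sc_opt x : \sum_i c i *: (ystar x i *m (B i)^T) = x.
Proof.
rewrite /ystar.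
have -> : \sum_i c i *: (x *m invmx Ninv *m B i *m invmx (A i) *m (B i)^T) =
    (x *m invmx Ninv) *m Ninv.
  by rewrite /Ninv /Msum mulmx_sumr; apply: eq_bigr => i _; rewrite -scalemxAr !mulmxA.
by rewrite mulmxKV // Ninv_unit.
Qed.

Lemma sc_val x :
  \sum_i c i * dotv (ystar x i *m A i) (ystar x i) = dotv (x *m invmx Ninv) x.
Proof. by rewrite sc_key sc_opt. Qed.

Lemma sc_lb x (y : forall i, 'rV[R]_(nn i)) :
  \sum_i c i *: (y i *m (B i)^T) = x ->
  dotv (x *m invmx Ninv) x <= \sum_i c i * dotv (y i *m A i) (y i).
Proof.
move=> yx.
have key i : 2 * dotv (y i *m A i) (ystar x i) - dotv (ystar x i *m A i) (ystar x i)
    <= dotv (y i *m A i) (y i).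
  have := PD_ge0 (y i - ystar x i) (@Apd i).
  rewrite mulmxBl !dotvDl !dotvDr !dotvNl !dotvNr.
  have -> : dotv (ystar x i *m A i) (y i) = dotv (y i *m A i) (ystar x i).
    by rewrite dotvA As dotvC.
  lra.
have := sc_key x y; rewrite yx => kx.
have := sc_val x => vx.
apply: le_trans (ler_sum _ (fun i _ => ler_wpM2l (ltW (c0 i)) (key i))).
have -> : \sum_i c i * (2 * dotv (y i *m A i) (ystar x i) -
    dotv (ystar x i *m A i) (ystar x i)) =
  2 * (\sum_i c i * dotv (y i *m A i) (ystar x i)) -
  \sum_i c i * dotv (ystar x i *m A i) (ystar x i).
  by rewrite mulr_sumr -sumrB; apply: eq_bigr => i _; ring.
rewrite kx vx; lra.
Qed.

End SupConv.

End P6.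

Section P7.
Variable R : realType.

Lemma inv_sup (T : set R) : T !=set0 -> (forall r, T r -> 0 < r) ->
  ((ereal_sup (EFin @` T) < +oo)%E ->
    (ereal_inf (EFin @` ((fun r : R => (r^-1)%R) @` T)) * ereal_sup (EFin @` T))%E = 1%E) /\
  (ereal_inf (EFin @` ((fun r : R => (r^-1)%R) @` T)) = 0%E <-> ereal_sup (EFin @` T) = +oo%E).
Proof.
move=> [r0 Tr0] Tpos.
set F := ereal_sup _; set E := ereal_inf _.
have hF0 : (r0%:E <= F)%E by apply: ereal_sup_ubound; exists r0.
have hEub r : T r -> (E <= (r^-1)%:E)%E.
  by move=> Tr; apply: ereal_inf_lbound; exists r^-1 => //; exists r.
have hE0 : (0 <= E)%E.
  apply/ereal_infP => _ [_ [r Tr <-] <-].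
  by rewrite lee_fin invr_ge0 ltW // Tpos.
have approx a : (a%:E < F)%E -> exists2 r, T r & a < r.
  by move=> /ereal_sup_gtP [_ [r Tr <-]]; rewrite lte_fin; exists r.
have [e Ee] : exists e : R, E = e%:E.
  exists (fine E); rewrite fineK // ge0_fin_numE //.
  by apply: le_lt_trans (hEub _ Tr0) _; rewrite ltry.
have e0 : 0 <= e by rewrite -lee_fin -Ee.
have eub r : T r -> e <= r^-1 by move=> Tr; rewrite -lee_fin -Ee hEub.
have Fcase : (exists2 s, F = s%:E & e * s = 1) \/ (F = +oo%E /\ e = 0).
  case EF: F hF0 approx => [s| |] hF0 approx; last by move: hF0; rewrite leeNy_eq.
  - left; exists s => //.
    have s0 : 0 < s by apply: lt_le_trans (Tpos _ Tr0) _; rewrite -lee_fin.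
    have e1 : s^-1 <= e.
      rewrite -lee_fin -Ee; apply/ereal_infP => _ [_ [r Tr <-] <-].
      have rs : r <= s by rewrite -lee_fin -EF; apply: ereal_sup_ubound; exists r.
      by rewrite lee_fin lef_pV2 ?posrE ?(Tpos _ Tr).
    have e2 : e <= s^-1.
      rewrite leNgt; apply/negP => es.
      have ep : 0 < e by apply: lt_trans es; rewrite invr_gt0.
      have [r1 Tr1 er] : exists2 r, T r & e^-1 < r.
        apply: approx; rewrite lte_fin -(invrK s) ltf_pV2 ?posrE ?invr_gt0 //.
      have := eub _ Tr1; rewrite leNgt => /negP; apply.
      by rewrite -(invrK e) ltf_pV2 ?posrE ?invr_gt0 ?(Tpos _ Tr1).
    have -> : e = s^-1 by apply/le_anti; rewrite e1 e2.
    by rewrite mulVf // lt0r_neq0.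
  - right; split => //; apply/le_anti; rewrite e0 andbT leNgt; apply/negP => ep.
    have [r1 Tr1 er] : exists2 r, T r & e^-1 < r by apply: approx; rewrite ltry.
    have := eub _ Tr1; rewrite leNgt => /negP; apply.
    by rewrite -(invrK e) ltf_pV2 ?posrE ?invr_gt0 ?(Tpos _ Tr1).
case: Fcase => [[s Fs es]|[Fs e00]]; rewrite Fs Ee.
  split; first by move=> _; rewrite -EFinM es.
  split => // /eqP; rewrite eqe => /eqP e00.
  by move: es; rewrite e00 mul0r => /eqP; rewrite eq_sym oner_eq0.
by rewrite e00; split => // /[!ltxx].
Qed.

End P7.

Section P8.
Variable R : realType.

Definition G k (Q : 'M[R]_k) := Num.sqrt (pi ^+ k / \det Q).

Lemma G_gt0 k (Q : 'M[R]_k) : Q^T = Q -> PD Q -> 0 < G Q.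
Proof.
move=> Qs Qpd; rewrite /G sqrtr_gt0 divr_gt0 ?exprn_gt0 ?pi_gt0 //.
exact: PD_det_gt0.
Qed.

Lemma GG k (Q : 'M[R]_k) : Q^T = Q -> PD Q -> G Q * G (invmx Q) = pi ^+ k.
Proof.
move=> Qs Qpd; have d0 := PD_det_gt0 Qs Qpd.
rewrite /G det_inv -sqrtrM; last by rewrite divr_ge0 ?exprn_ge0 ?pi_ge0 // ltW.
rewrite invrK.
have -> : pi ^+ k / \det Q * (pi ^+ k * \det Q) = (pi ^+ k) ^+ 2.
  by rewrite expr2; field; exact: lt0r_neq0.
by rewrite sqrtr_sqr ger0_norm // exprn_ge0 // pi_ge0.
Qed.

Variables (n m : nat) (nn : 'I_m -> nat) (c : 'I_m -> R)
  (B : forall i : 'I_m, 'M[R]_(n, nn i)).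
Hypothesis c0 : forall i, 0 < c i.
Hypothesis Bker : forall x : 'rV[R]_n, (forall i, x *m B i = 0) -> x = 0.
Hypothesis hsum : \sum_(i < m) c i * (nn i)%:R = n%:R.

Definition gf (A : forall i, 'M[R]_(nn i)) : forall i, 'rV[R]_(nn i) -> R :=
  fun i y => expR (- dotv (y *m A i) y).

Definition good (A : forall i, 'M[R]_(nn i)) := forall i, (A i)^T = A i /\ PD (A i).

Definition invA (A : forall i, 'M[R]_(nn i)) : forall i, 'M[R]_(nn i) :=
  fun i => invmx (A i).

Definition Pr (A : forall i, 'M[R]_(nn i)) := \prod_i powR (G (A i)) (c i).

Definition rJ A := G (Msum c B A) / Pr A.
Definition rI A := G (invmx (Ninv c B A)) / Pr A.

Lemma good_inv A : good A -> good (invA A).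
Proof. by move=> gA i; case: (gA i) => As Apd; exact: PD_inv. Qed.

Lemma invAK A : invA (invA A) = A.
Proof. by apply: functional_extensionality_dep => i; rewrite /invA invmxK. Qed.

Lemma prod_pow_exp (q : 'I_m -> R) :
  \prod_i powR (expR (- q i)) (c i) = expR (- \sum_i c i * q i).
Proof.
rewrite -sumrN expR_sum; apply: eq_bigr => i _; rewrite -expRM; congr expR; ring.
Qed.

Lemma J_gf A : good A -> J_fun c B (gf A) = (G (Msum c B A))%:E.
Proof.
move=> gA; rewrite /J_fun /gf.
rewrite (_ : (fun x => _) = fun x => (expR (- dotv (x *m Msum c B A) x))%:E).
  apply: int_gauss; first by apply: Msum_sym => i; case: (gA i).
  by apply: Msum_PD => // i; case: (gA i).
by apply/funext => x; rewrite prod_pow_exp dotv_Msum.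
Qed.

Lemma Pr_gf A : good A -> prod_int c (gf A) = Pr A.
Proof.
move=> gA; rewrite /prod_int /Pr; apply: eq_bigr => i _; congr powR.
by case: (gA i) => As Apd; rewrite /gf int_gauss.
Qed.

Lemma I_gf A : good A -> I_fun c B (gf A) = (G (invmx (Ninv c B A)))%:E.
Proof.
move=> gA.
have As i : (A i)^T = A i by case: (gA i).
have Apd i : PD (A i) by case: (gA i).
have [Ns Npd] := PD_inv (Ninv_sym c B As Apd) (Ninv_PD c0 Bker As Apd).
rewrite /I_fun.
rewrite (_ : (fun x => ereal_sup _) =
   fun x => (expR (- dotv (x *m invmx (Ninv c B A)) x))%:E).
  by rewrite outer_gauss int_gauss.
apply/funext => x; apply/eqP; rewrite eq_le; apply/andP; split.
  apply: ge_ereal_sup => _ [y yx <-]; rewrite lee_fin /gf prod_pow_exp ler_expR lerN2.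
  exact: sc_lb.
apply: ereal_sup_ubound; exists (ystar c B A x); first exact: sc_opt.
by rewrite /gf prod_pow_exp sc_val.
Qed.

End P8.

Section P9.
Variable R : realType.
Variables (n m : nat) (nn : 'I_m -> nat) (c : 'I_m -> R)
  (B : forall i : 'I_m, 'M[R]_(n, nn i)).
Hypothesis c0 : forall i, 0 < c i.
Hypothesis Bker : forall x : 'rV[R]_n, (forall i, x *m B i = 0) -> x = 0.
Hypothesis hsum : \sum_(i < m) c i * (nn i)%:R = n%:R.

Lemma Pr_gt0 (A : forall i, 'M[R]_(nn i)) : good A -> 0 < Pr c A.
Proof.
move=> gA; apply: prodr_gt0 => i _; apply: powR_gt0.
by case: (gA i) => As Apd; exact: G_gt0.
Qed.

Lemma rJ_gt0 (A : forall i, 'M[R]_(nn i)) : good A -> 0 < rJ c B A.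
Proof.
move=> gA; rewrite /rJ divr_gt0 ?Pr_gt0 //.
by apply: G_gt0; [apply: Msum_sym => i; case: (gA i)|apply: Msum_PD => // i; case: (gA i)].
Qed.

Lemma ppi : \prod_i powR (pi ^+ nn i) (c i) = pi ^+ n :> R.
Proof.
have pi0 : 0 < pi :> R := pi_gt0 R.
have -> : \prod_i powR (pi ^+ nn i) (c i) = expR ((\sum_i c i * (nn i)%:R) * ln pi).
  rewrite mulr_suml expR_sum; apply: eq_bigr => i _.
  rewrite /powR (negbTE (lt0r_neq0 (exprn_gt0 _ pi0))) lnXn //.
  by congr expR; rewrite -mulr_natr; ring.
by rewrite hsum expRM_natl lnK // posrE.
Qed.

Lemma rIJ (A : forall i, 'M[R]_(nn i)) : good A -> rI c B A * rJ c B (invA A) = 1.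
Proof.
move=> gA; have gA' := good_inv gA.
have Ms : (Msum c B (invA A))^T = Msum c B (invA A).
  by apply: Msum_sym => i; case: (gA' i).
have Mpd : PD (Msum c B (invA A)) by apply: Msum_PD => // i; case: (gA' i).
rewrite /rI /rJ.
have -> : Ninv c B A = Msum c B (invA A) by [].
rewrite mulrACA (mulrC (G _)) GG // -invfM.
have -> : Pr c A * Pr c (invA A) = pi ^+ n.
  rewrite /Pr -big_split /= -ppi; apply: eq_bigr => i _.
  case: (gA i) => As Apd.
  rewrite -powRM ?GG // ltW // G_gt0 //; by case: (gA' i).
by rewrite mulfV // lt0r_neq0 // exprn_gt0 // pi_gt0.
Qed.

Lemma gauss_gf (f : forall i, 'rV[R]_(nn i) -> R) :
  gaussian_tuple f -> exists2 A, good A & f = gf A.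
Proof.
move=> fg; pose A i := projT1 (cid (fg i)).
exists A.
  move=> i; have [As [Apd _]] := projT2 (cid (fg i)); split => //.
apply: functional_extensionality_dep => i; apply/funext => y.
by have [_ [_ ->]] := projT2 (cid (fg i)).
Qed.

Lemma gf_gauss (A : forall i, 'M[R]_(nn i)) : good A -> gaussian_tuple (gf A).
Proof. by move=> gA i; exists (A i); case: (gA i) => As Apd; split. Qed.

End P9.

Unset Implicit Arguments. Set Strict Implicit.

Lemma PD1 (R : realType) k : PD (1%:M : 'M[R]_k).
Proof.
move=> x x0; rewrite mulmx1 /dotv mxE.
have [j xj] : exists j, x 0 j != 0.
  apply: contrapT => H; move/negP: x0; apply; apply/eqP/rowP => j.
  rewrite mxE; apply/eqP/negPn/negP => xj; apply: H; by exists j.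
rewrite (bigD1 j) //=.
have h1 : 0 < x 0 j * x^T j 0.
  by rewrite mxE lt0r mulf_neq0 //= -expr2 sqr_ge0.
have h2 : 0 <= \sum_(i < k | i != j) x 0 i * x^T i 0.
  by apply: sumr_ge0 => i _; rewrite mxE -expr2 sqr_ge0.
lra.
Qed.

Theorem lemma2 (R : realType) (n m : nat) (nn : 'I_m -> nat) (c : 'I_m -> R)
    (B : forall i : 'I_m, 'M[R]_(n, nn i)) :
  (n <= m)%N ->
  (forall i, 0 < c i) ->
  (forall i, 0 < nn i <= n)%N ->
  \sum_(i < m) c i * (nn i)%:R = n%:R ->
  (forall i (y : 'rV[R]_(nn i)), exists x : 'rV[R]_n, x *m B i = y) ->
  (forall x : 'rV[R]_n, (forall i, x *m B i = 0) -> x = 0) ->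
  ((F_g c B < +oo)%E -> (E_g c B * F_g c B)%E = 1%E) /\
  (E_g c B = 0%E <-> F_g c B = +oo%E).
Proof.
move=> _ c0 _ hsum _ Bker.
pose T := [set rJ c B A | A in [set A : forall i, 'M[R]_(nn i) | good A]].
have Fset : F_g c B = ereal_sup (EFin @` T).
  rewrite /F_g; congr ereal_sup; apply/seteqP; split.
    move=> _ [f fg <-]; have [A gA ->] := gauss_gf fg.
    exists (rJ c B A); first by exists A.
    by rewrite J_gf // Pr_gf.
  move=> _ [_ [A gA <-] <-]; exists (gf A); first exact: gf_gauss.
  by rewrite J_gf // Pr_gf.
have Eset : E_g c B = ereal_inf (EFin @` ((fun r : R => r^-1) @` T)).
  rewrite /E_g; congr ereal_inf; apply/seteqP; split.
    move=> _ [f fg <-]; have [A gA ->] := gauss_gf fg.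
    have gA' := good_inv gA.
    exists ((rJ c B (invA A))^-1).
      by exists (rJ c B (invA A)) => //; exists (invA A).
    rewrite I_gf // Pr_gf //; congr EFin.
    have h := rIJ c0 Bker hsum gA.
    have u : rJ c B (invA A) != 0 by apply: lt0r_neq0; exact: rJ_gt0.
    by apply: (mulIf u); rewrite mulVf //; exact: esym h.
  move=> _ [_ [_ [A gA <-] <-] <-].
  have gA' := good_inv gA.
  exists (gf (invA A)); first exact: gf_gauss.
  rewrite I_gf // Pr_gf //; congr EFin.
  have h := rIJ c0 Bker hsum gA'; rewrite invAK in h.
  have u : rJ c B A != 0 by apply: lt0r_neq0; exact: rJ_gt0.
  by apply: (mulIf u); rewrite mulVf //; exact: esym h.
rewrite Eset Fset; apply: inv_sup.
  exists (rJ c B (fun i => 1%:M)); exists (fun i => 1%:M) => // i.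
  by split; [exact: trmx1 | exact: PD1].
by move=> _ [A gA <-]; exact: rJ_gt0.
Qed.
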